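(* Let $t$ be a node of the ontology tree and let $O_i,O_j$ be objects all of whose terms lie in the subtree rooted at $t$. Suppose each of $O_i$ and $O_j$ has multiple span at $t$, i.e. for each of the two objects there are at least two distinct children of $t$ whose subtrees contain a term of that object. Let $n_i=|O_i|$, $n_j=|O_j|$, $w_i=\sum_{a\in O_i} d(a,t)$ and $w_j=\sum_{b\in O_j} d(b,t)$. Then $$d_{avg}(O_i,O_j)\ \ge\ \frac{w_i+w_j}{n_i\,n_j}.$$
   Context: An ontology is a finite rooted tree whose nodes are called terms; each edge carries a nonnegative weight. The distance $d(t_i,t_j)$ between two terms is the sum of the edge weights along the unique path between them. An object is a nonempty finite set of terms; $|O|$ is its number of terms. The average pairwise distance is $d_{avg}(X,Y)=\frac{1}{|X|\,|Y|}\sum_{x\in X,\,y\in Y} d(x,y)$. The span of an object at node $t$ is the number of child subtrees of $t$ containing at least one of its terms; it is single if this number is 1 and multiple if it is at least 2. *)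

(* Defs.v *)
From HB Require Import structures.
From mathcomp Require Import all_boot all_order all_algebra.
Set Implicit Arguments. Unset Strict Implicit. Unset Printing Implicit Defensive.
Import Order.TTheory GRing.Theory Num.Theory.
Local Open Scope ring_scope.

(* An ontology: finite type of terms T, a root, a parent map [par]
   (the root is its own parent), and a weight [w v] on the edge (v, par v)
   for each non-root node v. *)

Definition is_rooted_tree (T : finType) (root : T) (par : T -> T) : Prop :=
  par root = root /\ forall x : T, fconnect par x root.

Definition in_subtree (T : finType) (par : T -> T) (x v : T) : bool :=
  fconnect par x v.

(* Distance: sum of the weights of the edges (v, par v) on the unique path
   between x and y; these are exactly the non-root v that are
   ancestors-or-self of exactly one of x, y. *)
Definition tdist (R : realFieldType) (T : finType) (root : T) (par : T -> T)
  (w : T -> R) (x y : T) : R :=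
  \sum_(v : T | (v != root) && (in_subtree par x v != in_subtree par y v)) w v.

Definition davg (R : realFieldType) (T : finType) (root : T) (par : T -> T)
  (w : T -> R) (X Y : {set T}) : R :=
  (\sum_(x in X) \sum_(y in Y) tdist root par w x y) / (#|X|%:R * #|Y|%:R).

Definition is_child (T : finType) (par : T -> T) (t c : T) : bool :=
  (par c == t) && (c != t).

Definition span (T : finType) (par : T -> T) (O : {set T}) (t : T) : nat :=
  #|[set c : T | is_child par t c && [exists a in O, in_subtree par a c]]|.

Definition multiple_span (T : finType) (par : T -> T) (O : {set T}) (t : T) : bool :=
  (2 <= span par O t)%N.

(* Main.v *)
Require Import Defs.
From HB Require Import structures.
From mathcomp Require Import all_boot all_order all_algebra.
Import Order.TTheory GRing.Theory Num.Theory.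
Local Open Scope ring_scope.

Section Aux.
Variables (T : finType) (par : T -> T).
Local Notation le x y := (fconnect par x y).

Lemma le_cmp {x y z} : le x y -> le x z -> le y z || le z y.
Proof.
move=> /iter_findex <- /iter_findex <-.
set m := findex par x y; set n := findex par x z.
case: (leqP m n) => H.
  by rewrite -(subnK H) iterD fconnect_iter.
by rewrite orbC -(subnK (ltnW H)) iterD fconnect_iter.
Qed.

Lemma le_child {c t x} : par c = t -> le c x -> x = c \/ le t x.
Proof.
move=> Hc /iter_findex <-; case: (findex par c x) => [|k]; first by left.
by right; rewrite iterSr Hc fconnect_iter.
Qed.

Lemma iter_root root n : par root = root -> iter n par root = root.
Proof. by move=> Hr; elim: n => //= n ->. Qed.

Lemma cyc_root root x n : is_rooted_tree root par -> iter n.+1 par x = x -> x = root.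
Proof.
move=> [Hr Hall] Hx.
have Hj : forall j, iter (j * n.+1) par x = x.
  by elim=> // j IH; rewrite mulSn iterD IH Hx.
have /iter_findex Hroot := Hall x; set r := findex par x root in Hroot.
have Hle : (r <= r * n.+1)%N by rewrite leq_pmulr.
by rewrite -(Hj r) -(subnK Hle) iterD Hroot iter_root.
Qed.

Lemma le_antisym {root x y} : is_rooted_tree root par -> le x y -> le y x -> x = y.
Proof.
move=> Ht /iter_findex Hy /iter_findex Hx.
move: Hy Hx; set m := findex par x y; set k := findex par y x => Hy Hx.
case: m Hy => [|m] Hy; first by [].
rewrite (@cyc_root root x (k + m)%N Ht); last first.
  by rewrite -addnS iterD Hy Hx.
rewrite (@cyc_root root y (m + k)%N Ht) //.
by rewrite -addSn iterD Hx Hy.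
Qed.

Lemma key {root t v} {O : {set T}} : is_rooted_tree root par ->
  ~~ le t v -> multiple_span par O t -> ~~ [forall b in O, le b v].
Proof.
move=> Ht Htv; rewrite /multiple_span /span => /card_gt1P [c1 [c2 [H1 H2 Hne]]].
apply/negP => /forall_inP Hall.
move: H1 H2; rewrite !inE => /andP [/andP [/eqP P1 N1] /exists_inP [a1 A1 L1]].
move=> /andP [/andP [/eqP P2 N2] /exists_inP [a2 A2 L2]].
have vc : forall c a, par c = t -> a \in O -> le a c -> le v c.
  move=> c a Pc Aa Lac.
  case/orP: (le_cmp (Hall a Aa) Lac) => // Hcv.
  case: (le_child Pc Hcv) => [->|]; first exact: connect0.
  by rewrite (negbTE Htv).
have V1 := vc _ _ P1 A1 L1; have V2 := vc _ _ P2 A2 L2.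
have ct : forall c d, par c = t -> par d = t -> d != t -> le c d -> c = d.
  move=> c d Pc Pd Nd Lcd; case: (le_child Pc Lcd) => // Htd.
  have Hdt : le d t by rewrite -Pd fconnect1.
  by move: Nd; rewrite (le_antisym Ht Hdt Htd) eqxx.
case/orP: (le_cmp V1 V2) => H.
  by move: Hne; rewrite (ct _ _ P1 P2 N2 H) eqxx.
by move: Hne; rewrite (ct _ _ P2 P1 N1 H) eqxx.
Qed.

End Aux.

Theorem mainTheorem4 (R : realFieldType) (T : finType) (root : T)
  (par : T -> T) (w : T -> R)
  (Htree : is_rooted_tree root par)
  (Hw : forall v : T, v != root -> 0 <= w v)
  (t : T) (Oi Oj : {set T})
  (Hi0 : Oi != set0) (Hj0 : Oj != set0)
  (Hisub : forall a, a \in Oi -> in_subtree par a t)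
  (Hjsub : forall b, b \in Oj -> in_subtree par b t)
  (Hispan : multiple_span par Oi t)
  (Hjspan : multiple_span par Oj t) :
  ((\sum_(a in Oi) tdist root par w a t) + (\sum_(b in Oj) tdist root par w b t))
    / (#|Oi|%:R * #|Oj|%:R)
  <= davg root par w Oi Oj.
Proof.
set P := fun v x => in_subtree par x v.
have Td : forall x y, tdist root par w x y =
    \sum_(v | v != root) ((P v x != P v y) : nat)%:R * w v.
  move=> x y; rewrite /tdist big_mkcondr /=; apply: eq_bigr => v _.
  by case: (_ != _); rewrite ?mul1r ?mul0r.
have E1 : forall O : {set T}, \sum_(a in O) tdist root par w a t =
    \sum_(v | v != root) (\sum_(a in O) ((P v a != P v t) : nat))%:R * w v.
  move=> O; rewrite (eq_bigr _ (fun a _ => Td a t)) exchange_big /=.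
  by apply: eq_bigr => v _; rewrite natr_sum mulr_suml.
have E3 : \sum_(a in Oi) \sum_(b in Oj) tdist root par w a b =
    \sum_(v | v != root)
      (\sum_(a in Oi) \sum_(b in Oj) ((P v a != P v b) : nat))%:R * w v.
  under eq_bigr do under eq_bigr do rewrite Td.
  under eq_bigr do rewrite exchange_big.
  rewrite exchange_big; apply: eq_bigr => v _.
  rewrite natr_sum mulr_suml; apply: eq_bigr => a _.
  by rewrite natr_sum mulr_suml.
rewrite /davg; apply: ler_wpM2r; first by rewrite invr_ge0 mulr_ge0.
rewrite E1 E1 E3 -big_split /=; apply: ler_sum => v Hv.
rewrite -mulrDl -natrD; apply: ler_wpM2r; first exact: Hw.
rewrite ler_nat.
case Pt: (P v t).
  have Z : forall O : {set T}, (forall a, a \in O -> in_subtree par a t) ->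
      (\sum_(a in O) ((P v a != true) : nat) = 0)%N.
    move=> O HO; apply: big1 => a Ha.
    by rewrite /P /in_subtree (connect_trans (HO a Ha) Pt).
  by rewrite (Z _ Hisub) (Z _ Hjsub).
have Htv : ~~ fconnect par t v by apply/negP => H; move: Pt; rewrite /P /in_subtree H.
have /forall_inPn [a0 Ha0 Na0] := @key _ _ root t v Oi Htree Htv Hispan.
have /forall_inPn [b0 Hb0 Nb0] := @key _ _ root t v Oj Htree Htv Hjspan.
have Pa0 : P v a0 = false by apply/negbTE.
have Pb0 : P v b0 = false by apply/negbTE.
have S1 : (\sum_(a in Oi) ((P v a != false) : nat) =
    \sum_(a in Oi) \sum_(b in Oj) ((P v a && (b == b0)) : nat))%N.
  apply: eq_bigr => a _; rewrite (bigD1 b0) //= eqxx andbT big1 ?addn0.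
    by case: (P v a).
  by move=> b /andP [_ /negbTE ->]; rewrite andbF.
have S2 : (\sum_(b in Oj) ((P v b != false) : nat) =
    \sum_(a in Oi) \sum_(b in Oj) (((a == a0) && P v b) : nat))%N.
  rewrite exchange_big; apply: eq_bigr => b _.
  rewrite (bigD1 a0) //= eqxx /= big1 ?addn0.
    by case: (P v b).
  by move=> a /andP [_ /negbTE ->].
rewrite S1 S2 -big_split; apply: leq_sum => a _; rewrite -big_split.
apply: leq_sum => b _.
case: eqP => [->|_]; case: eqP => [->|_]; rewrite ?Pa0 ?Pb0 /=;
  by case: (P v a); case: (P v b).
Qed.
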